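(* Let $N \ge 1$ and let $W_N$ be the set of binary words of length $N$. Define $\varphi_7 : W_N \to W_N$ by $\varphi_7(u) = v\, 1010110\, v'$ if $u = v\, 0110110\, v'$ where $v, v'$ are (possibly empty) words such that $v0110$ does not contain $0110110$ as a contiguous subword; and $\varphi_7(u) = u$ otherwise. Then $|P(\varphi_7(u))| \leq |P(u)|$ for every $u \in W_N$.
   Context: Juxtaposition denotes concatenation. For a binary word $w = w_1 \cdots w_\ell$ of length $\ell$, $P(w)$ is the set of indices $i \geq 2$ such that at least one of the following holds: (i) $\ell \geq i$ and $w_{i-1} w_i = 00$; (ii) $\ell \geq i+2$ and $w_{i-1} w_i w_{i+1} w_{i+2} = 0100$; (iii) $\ell \geq i+3$ and $w_{i-1} \cdots w_{i+3} = 01010$. *)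

(* Defs.v *)
(* Binary words are [seq bool]; letter 0 = false, 1 = true. *)
From mathcomp Require Import all_boot.
Set Implicit Arguments. Unset Strict Implicit. Unset Printing Implicit Defensive.

(* The contiguous factor w_{j+1} ... w_{j+n} (0-based start j). *)
Definition factor (w : seq bool) (j n : nat) : seq bool := take n (drop j w).

(* Membership of the (1-based) index i in P(w):
   i >= 2 and one of
   (i)   l >= i   and w_{i-1} w_i = 00,
   (ii)  l >= i+2 and w_{i-1} w_i w_{i+1} w_{i+2} = 0100,
   (iii) l >= i+3 and w_{i-1} ... w_{i+3} = 01010.
   The 1-based letter w_{i-1} is at 0-based position i-2. *)
Definition inP (w : seq bool) (i : nat) : bool :=
  (2 <= i) &&
  [|| (i <= size w) && (factor w (i - 2) 2 == [:: false; false]),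
      (i + 2 <= size w) && (factor w (i - 2) 4 == [:: false; true; false; false])
    | (i + 3 <= size w) && (factor w (i - 2) 5 == [:: false; true; false; true; false])].

(* P(w) as the increasing list of its elements; every element of P(w) lies
   in [2, size w], so enumerating 0 .. size w captures all of P(w). *)
Definition Pset (w : seq bool) : seq nat := [seq i <- iota 0 (size w).+1 | inP w i].

Definition cardP (w : seq bool) : nat := size (Pset w).

Definition pat7 : seq bool := [:: false; true; true; false; true; true; false].
Definition rep7 : seq bool := [:: true; false; true; false; true; true; false].
Definition suf0110 : seq bool := [:: false; true; true; false].

(* Admissible split positions k: u = v 0110110 v' with v = take k u and
   v 0110 not containing 0110110 as a contiguous subword. *)
Definition phi7_ok (u : seq bool) (k : nat) : bool :=
  (factor u k 7 == pat7) && ~~ infix pat7 (take k u ++ suf0110).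

(* phi_7(u) = v 1010110 v' for such a decomposition (it is unique when it
   exists; we take the first admissible k), and phi_7(u) = u otherwise. *)
Definition phi7 (u : seq bool) : seq bool :=
  match [seq k <- iota 0 (size u).+1 | phi7_ok u k] with
  | k :: _ => take k u ++ rep7 ++ drop (k + 7) u
  | [::] => u
  end.

(* Main.v *)
Require Import Defs.
From mathcomp Require Import all_boot.
From mathcomp Require Import zify.

Definition inQ (s : seq bool) : bool :=
  [|| take 2 s == [:: false; false], take 4 s == [:: false; true; false; false]
    | s == [:: false; true; false; true; false]].

Lemma inP_window w i : 2 <= i -> i + 3 <= size w ->
  inP w i = inQ (take 5 (drop (i - 2) w)).
Proof.
move=> h2 h3; rewrite /inP /factor /inQ h2 /=.
have -> : i <= size w by lia.
have -> : i + 2 <= size w by lia.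
by rewrite h3 /= !take_takel.
Qed.

Lemma inP_drop w1 w2 i : size w1 = size w2 -> drop (i - 2) w1 = drop (i - 2) w2 ->
  inP w1 i = inP w2 i.
Proof. by move=> hs hd; rewrite /inP /factor hs hd. Qed.

Lemma key (v v' : seq bool) i :
  inP (v ++ rep7 ++ v') i -> inP (v ++ pat7 ++ v') i.
Proof.
have hsz : size (v ++ rep7 ++ v') = size (v ++ pat7 ++ v') by rewrite !size_cat.
case: (leqP 2 i) => h2; last by rewrite /inP leqNgt h2.
case: (leqP (i - 2) (size v + 2)) => hj.
- have hs : i + 3 <= size (v ++ pat7 ++ v') by rewrite !size_cat /=; lia.
  rewrite inP_window //; last by rewrite hsz.
  rewrite inP_window // !catA.
  have e : forall s : seq bool, size s = 7 ->
      take 5 (drop (i - 2) ((v ++ s) ++ v')) = take 5 (drop (i - 2) (v ++ s)).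
    move=> s hs7; rewrite drop_cat size_cat hs7.
    have -> : i - 2 < size v + 7 by lia.
    rewrite take_cat size_drop size_cat hs7.
    case: ifP => // hlt; have -> : 5 - (size v + 7 - (i - 2)) = 0 by lia.
    by rewrite take0 cats0 take_oversize // size_drop size_cat hs7; lia.
  rewrite !e //.
  case: (leqP (i - 2) (size v)) => hk.
  + rewrite !drop_cat.
    case: ifP => hlt.
      move: (drop (i - 2) v) => r.
      by rewrite /inQ; case: r => [|[] [|[] [|[] [|[] [|[] r]]]]] /=; rewrite ?take0.
    have -> : i - 2 - size v = 0 by lia.
    by [].
  + rewrite !drop_cat.
    have -> : (i - 2 < size v) = false by lia.
    have : (i - 2 - size v = 1) \/ (i - 2 - size v = 2) by lia.
    by rewrite /inQ; case=> ->.
- rewrite (@inP_drop (v ++ pat7 ++ v') (v ++ rep7 ++ v') i) //.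
  rewrite !drop_cat.
  have -> : (i - 2 < size v) = false by lia.
  have : (i - 2 - size v = 3) \/ (i - 2 - size v = 4) \/
         (i - 2 - size v = 5) \/ (i - 2 - size v = 6) \/ (7 <= i - 2 - size v) by lia.
  case=> [->|[->|[->|[->|h7]]]] //.
  rewrite /=; have -> : (i - 2 - size v < 7) = false by lia.
  done.
Qed.

Theorem lemma4p7 (N : nat) (hN : 1 <= N) (u : seq bool) (hu : size u = N) :
  cardP (phi7 u) <= cardP u.
Proof.
rewrite /phi7.
case E: [seq k <- iota 0 (size u).+1 | phi7_ok u k] => [|k ks] //.
have : k \in [seq k <- iota 0 (size u).+1 | phi7_ok u k] by rewrite E mem_head.
rewrite mem_filter => /andP [/andP [/eqP hf _] _].
have hu' : u = take k u ++ pat7 ++ drop (k + 7) u.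
  by rewrite -hf /factor addnC -drop_drop !cat_take_drop.
have hsz : size (take k u ++ rep7 ++ drop (k + 7) u) = size u.
  by rewrite [in RHS]hu' !size_cat.
rewrite /cardP /Pset hsz !size_filter.
apply: sub_count => i /=.
by rewrite [in X in X -> _]/= => H; rewrite hu'; apply: key.
Qed.
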